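(* Let $G$ be a finite metacyclic group and let $G=AB$ be a metacyclic factorization. Let $m=|A|$, $s=[G:B]$, $r=r_G(A)$ and $o=o_G(A)$. Then: (1) for every set of primes $\mu$, $A_\mu B_\mu$ is a Hall $\mu$-subgroup of $G$; (2) for a prime $p$, $p\in\pi'$ if and only if $G'\setminus Z(G)$ has an element of order $p$, if and only if $A\setminus Z(G)$ has an element of order $p$; (3) $G'_{\pi'}=A_{\pi'}$ and $A_{\pi'}\cap B_{\pi'}=1$; (4) $\pi'=\pi(m)\setminus\pi(r)$, $s_{\pi'}=m_{\pi'}$ and $o=o_G$; (5) $G=A_{\pi'}\rtimes\big(B_{\pi'}\times\prod_{p\in\pi}A_pB_p\big)$; in particular $[B_{p'},A_p]=1$ for every $p\in\pi$.
   Context: All groups are finite; $G'$ is the commutator subgroup and $Z(G)$ the center. For $m\in\mathbb N$, $\pi(m)$ is the set of prime divisors of $m$, $m_p$ the largest power of $p$ dividing $m$, $m_\mu=\prod_{p\in\mu}m_p$. For a cyclic (or abelian) group $X$ and set of primes $\mu$, $X_\mu$ is its Hall $\mu$-subgroup; $X_p$, $X_{p'}$ are the Sylow $p$-subgroup and Hall $p'$-subgroup. For $G$ finite metacyclic: $\pi$ is the set of primes $p$ dividing $|G|$ such that $G$ has a normal Hall $p'$-subgroup; $\pi'=\pi(|G|)\setminus\pi$; $o_G$ is the $\pi$-part of the order of the group $\mathrm{Inn}_G(G'_{\pi'})$ of automorphisms of $G'_{\pi'}$ induced by conjugation by elements of $G$. A metacyclic factorization of $G$ is $G=AB$ with $A$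 a cyclic normal subgroup and $B$ a cyclic subgroup. For $A$ cyclic normal of order $m$, $T_G(A)$ is the subgroup of $\mathcal U_m$ (units of $\mathbb Z/m\mathbb Z$) of classes $[k]_m$ such that $x\mapsto x^k$ is the restriction to $A$ of an inner automorphism of $G$. For a cyclic $T\le\mathcal U_m$, $\mathrm{inv}(T)=(r,\epsilon,o)$ where $r$ is the greatest divisor of $m$ such that $T$ maps trivially to $\mathcal U_{r_{2'}}$ and into $\{\pm1\}$ in $\mathcal U_{r_2}$ (via reduction maps); $\epsilon=-1$ if the image of $T$ in $\mathcal U_{r_2}$ is nontrivial and $\epsilon=1$ otherwise; $o$ is the order of the image of the Hall $\nu'$-subgroup of $T$ in $\mathcal U_{m_\nu}$, where $\nu=\pi(m)\setminus\pi(r)$ and $\nu'$ is the set of primes not in $\nu$. $(r_G(A),\epsilon_G(A),o_G(A))=\mathrm{inv}(T_G(A))$. *)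

(* Defs.v *)
From mathcomp Require Import all_boot all_fingroup all_solvable.
Set Implicit Arguments. Unset Strict Implicit. Unset Printing Implicit Defensive.
Import GroupScope.

Section MetacyclicInvariants.
Variable gT : finGroupType.
Implicit Types G A X : {set gT}.

Definition piG (G : {set gT}) : nat_pred :=
  [pred p | [&& prime p, p %| #|G| &
     [exists H : {group gT}, (p^').-Hall(G) H && (H <| G)]]].

Definition piG' (G : {set gT}) : nat_pred :=
  [pred p | [&& prime p, p %| #|G| & p \notin piG G]].

(* T_G(A) as the list of representatives k in [0, m) (m = |A|) of the classes
   [k]_m in U_m such that x |-> x^k is the restriction to A of conjugation by
   some element of G. *)
Definition TG (G A : {set gT}) : seq nat :=
  [seq k <- iota 0 #|A| | coprime k #|A| &&
     [exists g in G, [forall x in A, x ^ g == x ^+ k]]].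

(* r divides m and T maps trivially to U_{r_2'} and into {+-1} in U_{r_2} *)
Definition r_ok (T : seq nat) (r : nat) : bool :=
  all (fun k => (k == 1 %[mod r`_(2^')]) &&
               ((k == 1 %[mod r`_2]) || (r`_2 %| k.+1))) T.

Definition rGA (G A : {set gT}) : nat :=
  \max_(d < #|A|.+1 | (d %| #|A|) && r_ok (TG G A) d) d.

Definition nuGA (G A : {set gT}) : nat_pred :=
  [pred p | (p \in primes #|A|) && (p \notin primes (rGA G A))].

(* Hall nu'-subgroup of the finite abelian group T (a subgroup of U_m):
   its elements are those whose order divides |T|_{nu'} *)
Definition TG_nu' (G A : {set gT}) : seq nat :=
  let T := TG G A in
  [seq k <- T | k ^ (size T)`_((nuGA G A)^') == 1 %[mod #|A|]].

(* o_G(A): order of the image of the Hall nu'-subgroup of T in U_{m_nu} *)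
Definition oGA (G A : {set gT}) : nat :=
  size (undup [seq k %% #|A|`_(nuGA G A) | k <- TG_nu' G A]).

(* Inn_G(X): automorphisms of X induced by conjugation by elements of G,
   represented by their graphs (identity outside X). *)
Definition InnG (G X : {set gT}) : {set {ffun gT -> gT}} :=
  [set [ffun x => if x \in X then x ^ g else x] | g in G].

Definition oG (G : {set gT}) : nat :=
  #|InnG G 'O_(piG' G)(G^`(1))|`_(piG G).

End MetacyclicInvariants.

(* Main.v *)
Require Import Defs.
From mathcomp Require Import all_boot all_fingroup all_solvable.
Set Implicit Arguments. Unset Strict Implicit. Unset Printing Implicit Defensive.
Import GroupScope.

Section Meta.
Variable gT : finGroupType.
Variables G A B : {group gT}.
Hypotheses (nAG : A <| G) (cA : cyclic A) (cB : cyclic B) (defG : A * B = G).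

Lemma sAG : A \subset G. Proof. by rewrite -defG mulG_subl. Qed.
Lemma sBG : B \subset G. Proof. by rewrite -defG mulG_subr. Qed.
Lemma abA : abelian A. Proof. exact: cyclic_abelian. Qed.
Lemma abB : abelian B. Proof. exact: cyclic_abelian. Qed.
Lemma nilA : nilpotent A. Proof. exact: abelian_nil abA. Qed.
Lemma nilB : nilpotent B. Proof. exact: abelian_nil abB. Qed.

Lemma OA_normal mu : 'O_mu(A) <| G.
Proof. exact: char_normal_trans (pcore_char _ _) nAG. Qed.

Lemma sub_abel_pcore (X H : {group gT}) mu :
  abelian X -> H \subset X -> (H \subset 'O_mu(X)) = mu.-group H.
Proof.
move=> abX sHX; apply: sub_Hall_pcore => //.
exact: nilpotent_pcore_Hall (abelian_nil abX).
Qed.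

Lemma card_abel_pcore (X : {group gT}) mu :
  abelian X -> #|'O_mu(X)| = (#|X|`_mu)%N.
Proof. by move=> abX; apply: card_Hall; apply: nilpotent_pcore_Hall (abelian_nil abX). Qed.

Lemma abAB : abelian (A :&: B).
Proof. exact: abelianS (subsetIl _ _) abA. Qed.

Lemma pcoreI_AB mu : 'O_mu(A) :&: 'O_mu(B) = 'O_mu(A :&: B).
Proof.
apply/eqP; rewrite eqEsubset; apply/andP; split.
  rewrite sub_abel_pcore ?abAB ?setISS ?pcore_sub //.
  exact: pgroupS (subsetIl _ _) (pcore_pgroup _ _).
have sOA : 'O_mu(A :&: B) \subset A by apply: subset_trans (pcore_sub _ _) (subsetIl _ _).
have sOB : 'O_mu(A :&: B) \subset B by apply: subset_trans (pcore_sub _ _) (subsetIr _ _).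
by rewrite subsetI !sub_abel_pcore ?abA ?abB ?pcore_pgroup.
Qed.

Lemma gset_mu mu : group_set ('O_mu(A) * 'O_mu(B)).
Proof.
apply/comm_group_setP; apply: esym; apply: normC.
exact: subset_trans (subset_trans (pcore_sub _ _) sBG) (normal_norm (OA_normal mu)).
Qed.

Lemma part1 mu : group_set ('O_mu(A) * 'O_mu(B)) /\ mu.-Hall(G) ('O_mu(A) * 'O_mu(B)).
Proof.
split; first exact: gset_mu.
pose H := Group (gset_mu mu).
have -> : 'O_mu(A) * 'O_mu(B) = H by [].
rewrite pHallE; apply/andP; split.
  by rewrite /= -defG mulgSS ?pcore_sub.
have := mul_cardG 'O_mu(A) 'O_mu(B); rewrite pcoreI_AB.
rewrite !card_abel_pcore ?abA ?abB ?abAB // => eH.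
have := mul_cardG A B; rewrite defG => eG.
have := congr1 (fun n => (n`_mu)%N) eG; rewrite !partnM ?cardG_gt0 // eH.
move/eqP; rewrite eqn_pmul2r ?part_gt0 // => /eqP ->.

Qed.

Lemma sub_cyc_normal (H : {group gT}) : H \subset A -> H <| G.
Proof. by move=> sHA; apply: char_normal_trans nAG; rewrite sub_cyclic_char. Qed.

Lemma ZAB : A :&: B \subset 'Z(G).
Proof.
apply/subsetP=> z /setIP[Az Bz]; apply/centerP; split.
  exact: subsetP sAG z Az.
move=> g; rewrite -defG => /imset2P[x y Ax By ->].
apply: commuteM.
  by apply: commute_sym; apply: (centsP abA).
by apply: commute_sym; apply: (centsP abB).
Qed.

Lemma L4a p x : prime p -> x \in A :\: 'Z(G) -> #[x] = p -> p \in piG' G.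
Proof.
move=> pr_p /setDP[Ax nZx] ox.
have Gx : x \in G := subsetP sAG x Ax.
have pG : p %| #|G| by rewrite -ox order_dvdG.
rewrite inE /= pr_p pG /=; apply/negP; rewrite inE /= => /and3P[_ _].
case/existsP=> H /andP[hallH nHG]; case/negP: nZx.
pose X := <[x]>%G.
have nXG : X <| G by apply: sub_cyc_normal; rewrite cycle_subG.
have cardX : #|X| = p by rewrite /= -ox.
have sXG : X \subset G by case/andP: nXG.
have cHX : H \subset 'C(X).
  have sHG := pHall_sub hallH.
  have : [~: X, H] \subset X :&: H.
    apply: commg_subI; rewrite subsetI ?subxx //=.
      exact: subset_trans sXG (normal_norm nHG).
    exact: subset_trans sHG (normal_norm nXG).
  rewrite coprime_TIg.
    by move/trivgP/commG1P; rewrite centsC.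
  rewrite cardX coprime_sym; apply: (pnat_coprime (pHall_pgroup hallH)).
  by rewrite pnatNK; apply: pnat_id.
have pX : p.-group X by rewrite /pgroup cardX pnat_id.
have [P sylP sXP] := Sylow_superset sXG pX.
have pP := pHall_pgroup sylP.
have cPX : P \subset 'C(X).
  have nXP : X <| P := normalS sXP (pHall_sub sylP) nXG.
  have ntX : X :!=: 1 by rewrite -cardG_gt1 cardX prime_gt1.
  have := meet_center_nil (pgroup_nil pP) nXP ntX.
  move/(prime_meetG (G := X)); rewrite cardX => /(_ pr_p) sXZ.
  by rewrite centsC; apply: subset_trans sXZ (subsetIr _ _).
have eG : H * P = G.
  apply/eqP; rewrite eqEcard mul_subG ?(pHall_sub hallH) ?(pHall_sub sylP) //=.
  rewrite TI_cardMg.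
    by rewrite (card_Hall hallH) (card_Hall sylP) mulnC partnC.
  apply: coprime_TIg; rewrite coprime_sym.
  exact: pnat_coprime pP (pHall_pgroup hallH).
have sGC : G \subset 'C(X) by rewrite -eG mul_subG.
apply/centerP; split=> //.
have : x \in 'C(G) by rewrite -cycle_subG centsC.
by move/centP.
Qed.

Lemma cent_Op_Op'B p :
  (forall y, y \in A -> #[y] = p -> y \in 'Z(G)) ->
  'O_p(A) \subset 'C('O_p^'(B)).
Proof.
move=> nZ; apply/commG1P.
have nAB : 'O_p^'(B) \subset 'N('O_p(A)).
  exact: subset_trans (subset_trans (pcore_sub _ _) sBG) (normal_norm (OA_normal p)).
have TI := coprime_abel_cent_TI nAB
  (pnat_coprime (pcore_pgroup _ _) (pcore_pgroup _ _))
  (abelianS (pcore_sub _ _) abA).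
apply/eqP; apply/negPn/negP => ntK.
have pK : p.-group [~: 'O_p(A), 'O_p^'(B)].
  apply: pgroupS (pcore_pgroup p A).
  by rewrite commg_subl.
have [pr_p pK' _] := pgroup_pdiv pK ntK.
have [y Ky oy] := Cauchy pr_p pK'.
have Ay : y \in A.
  apply: (subsetP (pcore_sub p A)); apply: (subsetP _ y Ky).
  by rewrite commg_subl.
have Zy := nZ y Ay oy.
have : y \in 'C_[~: 'O_p(A), 'O_p^'(B)]('O_p^'(B)).
  rewrite inE Ky /=; apply/centP => z Bz.
  case/centerP: Zy => _ /(_ z); apply.
  exact: subsetP (subset_trans (pcore_sub _ _) sBG) z Bz.
rewrite TI => /set1P y1.
by move: oy; rewrite y1 order1 => p1; rewrite -p1 in pr_p.
Qed.

Lemma L4b p : prime p -> p \in piG' G ->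
  exists x, x \in A :\: 'Z(G) /\ #[x] = p.
Proof.
move=> pr_p; rewrite inE /= => /and3P[_ pG npi].
case: (boolP [exists x in A :\: 'Z(G), #[x] == p]) => [/exists_inP[x Hx /eqP ox] | noX].
  by exists x.
case/negP: npi; rewrite inE /= pr_p pG /=.
have nZ : forall y, y \in A -> #[y] = p -> y \in 'Z(G).
  move=> y Ay oy; apply/negPn/negP => nZy; move/negP: noX; apply.
  apply/exists_inP; exists y; last by rewrite oy.
  by rewrite inE nZy Ay.
have cAB := cent_Op_Op'B nZ.
pose H := Group (gset_mu p^').
have [_ hallH] := part1 p^'.
apply/existsP; exists H; rewrite hallH /=.
rewrite /normal (pHall_sub hallH) /= -defG mul_subG //.
  have defA := dprodW (nilpotent_pcoreC p nilA).
  have sA : A \subset 'O_p(A) * 'O_p^'(A) by rewrite defA.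
  apply: subset_trans sA _; apply: mul_subG.
    apply: normsM; last by apply: cents_norm.
    exact: subset_trans (subset_trans (pcore_sub _ _) sAG) (normal_norm (OA_normal _)).
  apply: subset_trans (normG H); exact: mulG_subl.
rewrite normsM //; first exact: subset_trans sBG (normal_norm (OA_normal _)).
by apply: cents_norm; apply: sub_abelian_cent abB (pcore_sub _ _).
Qed.

Lemma der1A : G^`(1) \subset A.
Proof.
apply: der1_min; first exact: normal_norm nAG.
by rewrite -defG quotientMidl; apply: quotient_abelian abB.
Qed.

Lemma L2b p : prime p ->
  (exists x, x \in G^`(1) :\: 'Z(G) /\ #[x] = p) <->
  (exists x, x \in A :\: 'Z(G) /\ #[x] = p).
Proof.
move=> pr_p; split=> [[x [/setDP[Dx nZx] ox]] | [x [/setDP[Ax nZx] ox]]].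
  by exists x; rewrite inE nZx (subsetP der1A).
exists x; split=> //; rewrite inE nZx /=.
have Gx : x \in G := subsetP sAG x Ax.
pose X := <[x]>%G.
have nXG : X <| G by apply: sub_cyc_normal; rewrite cycle_subG.
have [g Gg ncxg] : exists2 g, g \in G & ~ commute x g.
  case: (boolP [exists g in G, [~ x, g] != 1]) => [/exists_inP[g Gg /eqP ng]| noG].
    by exists g => // /commgP/eqP.
  case/negP: nZx; apply/centerP; split=> // g Gg; apply/commgP.
  by apply/negPn/negP => ng; case/negP: noG; apply/exists_inP; exists g.
pose c := [~ x, g].
have Dc : c \in G^`(1) by rewrite derg1 mem_commg.
have Xc : c \in X.
  by rewrite /c commgEl groupM ?groupV ?cycle_id // memJ_norm ?cycle_id // (subsetP (normal_norm nXG)).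
have sXc : X \subset <[c]>.
  apply: prime_meetG; first by rewrite /= -orderE ox.
  rewrite (setIidPr _); last by rewrite cycle_subG.
  by rewrite cycle_eq1; apply/negP => /commgP.
have sD : <[c]> \subset G^`(1) by rewrite cycle_subG.
exact: subsetP (subset_trans sXc sD) x (cycle_id x).
Qed.

Lemma ZApi'_TI : 'O_(piG' G)(A) :&: 'Z(G) = 1.
Proof.
apply/eqP; apply/negPn/negP => ntW.
pose W := ('O_(piG' G)(A) :&: 'Z(G))%G.
have ntW' : 1 < #|W| by rewrite cardG_gt1.
have pr_q := pdiv_prime ntW'.
set q := pdiv #|W| in pr_q.
have [y Wy oy] := Cauchy pr_q (pdiv_dvd _).
have q_pi' : q \in piG' G.
  have : (piG' G).-group W by apply: pgroupS (subsetIl _ _) (pcore_pgroup _ _).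
  move/pnatPpi; apply; rewrite mem_primes pr_q cardG_gt0; exact: pdiv_dvd.
have [x [/setDP[Ax nZx] ox]] := L4b pr_q q_pi'.
have /setIP[Oy Zy] := Wy.
have Ay : y \in A := subsetP (pcore_sub _ _) y Oy.
have exy : <[x]>%G = <[y]>%G :> {set gT}.
  apply/eqP; rewrite (eq_subG_cyclic cA) ?cycle_subG //.
  by rewrite -!orderE ox oy.
case/negP: nZx; have : x \in <[y]> by rewrite -exy cycle_id.
by apply: subsetP; rewrite cycle_subG.
Qed.

Lemma inZ_of z : z \in A -> (forall b, b \in B -> commute z b) -> z \in 'Z(G).
Proof.
move=> Az cBz; apply/centerP; split; first exact: subsetP sAG z Az.
move=> g; rewrite -defG => /imset2P[x y Ax By ->].
apply: commuteM; last exact: cBz.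
by apply: (centsP abA).
Qed.

Lemma Api'_sub_der : 'O_(piG' G)(A) \subset G^`(1).
Proof.
set X := 'O_(piG' G)(A).
have [b defB] := cyclicP cB.
have Bb : b \in B by rewrite defB cycle_id.
have Gb : b \in G := subsetP sBG b Bb.
have sXA : X \subset A := pcore_sub _ _.
pose f := fun x => [~ x, b].
have injf : {in X &, injective f}.
  move=> x y Xx Xy; rewrite /f !commgEl => exy.
  pose z := y * x^-1.
  have Xz : z \in X by rewrite groupM ?groupV.
  have zb : z ^ b = z.
    have e1 : x ^ b = x * (y^-1 * y ^ b) by rewrite -exy mulKVg.
    rewrite /z conjMg conjVg e1; move: (y ^ b) => w.
    by rewrite !invMg invgK !mulgA mulgV mul1g.
  have Zz : z \in 'Z(G).
    apply: inZ_of; first exact: subsetP sXA z Xz.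
    move=> b'; rewrite defB => /cycleP[i ->]; apply: commuteX.
    by apply/commgP; apply/conjg_fixP.
  have : z \in X :&: 'Z(G) by rewrite inE Xz.
  rewrite ZApi'_TI => /set1P /eqP; rewrite /z -eq_mulgV1 => /eqP.
  by [].
have sfX : f @: X \subset X.
  apply/subsetP=> _ /imsetP[x Xx ->]; rewrite /f commgEl groupM ?groupV //.
  by rewrite memJ_norm // (subsetP (normal_norm (OA_normal _))).
have sfD : f @: X \subset G^`(1).
  apply/subsetP=> _ /imsetP[x Xx ->]; rewrite derg1 mem_commg //.
  exact: subsetP (subset_trans sXA sAG) x Xx.
have efX : f @: X = X by apply/eqP; rewrite eqEcard sfX (card_in_imset injf) leqnn.
by rewrite -efX.
Qed.

Lemma part3 : 'O_(piG' G)(G^`(1)) = 'O_(piG' G)(A) /\ 'O_(piG' G)(A) :&: 'O_(piG' G)(B) = 1.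
Proof.
split.
  apply/eqP; rewrite eqEsubset; apply/andP; split.
    rewrite sub_abel_pcore ?abA ?pcore_pgroup //.
    exact: subset_trans (pcore_sub _ _) der1A.
  rewrite sub_abel_pcore ?pcore_pgroup ?Api'_sub_der //.
  exact: abelianS der1A abA.
apply/trivgP; rewrite -ZApi'_TI subsetI subsetIl /=.
rewrite pcoreI_AB; apply: subset_trans (pcore_sub _ _) ZAB.
Qed.

Lemma memTG k : (k \in TG G A) =
  [&& coprime k #|A|, [exists g in G, [forall x in A, x ^ g == x ^+ k]] & k < #|A|].
Proof. by rewrite /TG mem_filter mem_iota add0n leq0n -andbA. Qed.

Lemma T_of g : g \in G -> exists2 k, k \in TG G A & forall x, x \in A -> x ^ g = x ^+ k.
Proof.
move=> Gg; have [a defA] := cyclicP cA.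
have oa : #[a] = #|A| by rewrite defA.
have nAg : A :^ g = A := (normsP (normal_norm nAG)) g Gg.
have : a ^ g \in A by rewrite memJ_norm ?(subsetP (normal_norm nAG)) // defA cycle_id.
rewrite {1}defA => /cycleP[i ei].
pose k := i %% #[a].
have eak : a ^ g = a ^+ k by rewrite ei expg_mod_order.
have hk : forall x, x \in A -> x ^ g = x ^+ k.
  move=> x; rewrite defA => /cycleP[j ->].
  by rewrite conjXg eak expgnAC.
exists k => //; rewrite memTG; apply/and3P; split.
- rewrite coprime_sym -oa -generator_coprime /generator -eak cycleJ -defA nAg.
  by [].
- by apply/exists_inP; exists g => //; apply/forall_inP => x Ax; rewrite hk.
- by rewrite -oa ltn_pmod.
Qed.

Lemma T_to k : k \in TG G A ->
  coprime k #|A| /\ exists2 g, g \in G & forall x, x \in A -> x ^ g = x ^+ k.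
Proof.
rewrite memTG => /and3P[ck /exists_inP[g Gg /forall_inP hg] _]; split=> //.
by exists g => // x Ax; apply/eqP; apply: hg.
Qed.

Lemma r_ok1 : r_ok (TG G A) 1.
Proof. by apply/allP => k _; rewrite !partn1 !modn1. Qed.

Lemma r_spec : let r := rGA G A in
  [/\ r %| #|A|, 0 < r, r_ok (TG G A) r &
      forall d, d %| #|A| -> r_ok (TG G A) d -> d <= r].
Proof.
move=> r.
have rmax : forall d, d %| #|A| -> r_ok (TG G A) d -> d <= r.
  move=> d dm okd.
  have ltd : d < #|A|.+1 by rewrite ltnS dvdn_leq.
  rewrite /r /rGA; apply: (@bigmax_sup _ (Ordinal ltd)) => //=.
  by rewrite dm okd.
have r_gt0 : 0 < r by apply: rmax r_ok1; exact: dvd1n.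
have : (r == 0) || ((r %| #|A|) && r_ok (TG G A) r).
  rewrite /r /rGA; apply: (big_ind (fun x => (x == 0) || ((x %| #|A|) && r_ok (TG G A) x))).
  - by [].
  - move=> x y hx hy; rewrite /maxn; case: ifP => _ //.
  - by move=> i ->; rewrite orbT.
have rn0 : (r == 0) = false by rewrite eqn0Ngt r_gt0.
by rewrite rn0 /= => /andP[rm okr]; split.
Qed.

Lemma mod1_dvd k d p : k == 1 %[mod d] -> p %| d -> k == 1 %[mod p].
Proof. by move=> /eqP e pd; rewrite -(modn_dvdm k pd) e modn_dvdm. Qed.

Lemma L5 p : prime p ->
  (exists x, x \in A :\: 'Z(G) /\ #[x] = p) <->
  (p \in primes #|A|) && (p \notin primes (rGA G A)).
Proof.
move=> pr_p; have [rm r_gt0 okr rmax] := r_spec.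
set r := rGA G A in rm r_gt0 okr rmax *.
have p_gt1 := prime_gt1 pr_p.
split.
  move=> [x [/setDP[Ax nZx] ox]].
  have pm : p %| #|A| by rewrite -ox order_dvdG.
  rewrite mem_primes pr_p cardG_gt0 pm /=; apply/negP => pr.
  case/negP: nZx; apply: inZ_of => // b Bb.
  have [k Tk hk] := T_of (subsetP sBG b Bb).
  have [ck _] := T_to Tk.
  have k1 : k == 1 %[mod p].
    case: (eqVneq p 2) => [p2 | np2].
      have ok : odd k.
        by rewrite -coprimen2; apply: coprime_dvdr ck; rewrite -p2.
      by rewrite p2 modn2 ok.
    have /andP[k1 _] := allP okr k Tk.
    apply: mod1_dvd k1 _.
    have pp : p = (p`_(2^'))%N by rewrite part_pnat_id // pnatE // inE /= eq_sym.
    rewrite pp partn_dvd //; move: pr; rewrite mem_primes => /and3P[].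
    by [].
  apply/commgP; apply/conjg_fixP; rewrite (hk x Ax) -expg_mod_order ox.
  by rewrite (eqP k1) modn_small.
rewrite mem_primes pr_p cardG_gt0 /= => /andP[pm npr].
have [x Ax ox] := Cauchy pr_p pm.
case: (boolP (x \in 'Z(G))) => Zx; last by exists x; rewrite inE Zx Ax.
exfalso.
have npr' : ~~ (p %| r) by move: npr; rewrite mem_primes pr_p r_gt0.
have cpr : coprime p r by rewrite prime_coprime.
have k1 : forall k, k \in TG G A -> k == 1 %[mod p].
  move=> k Tk; have [_ [g Gg hg]] := T_to Tk.
  have := hg x Ax; case/centerP: Zx => _ /(_ g Gg) cxg.
  have -> : x ^ g = x by apply/conjg_fixP; apply/commgP.
  move/eqP; rewrite -{1}(expg1 x) eq_expg_mod_order ox eq_sym.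
  by [].
have okrp : r_ok (TG G A) (r * p)%N.
  apply/allP => k Tk; have /andP[h1 h2] := allP okr k Tk.
  rewrite !partnM // ?prime_gt0 //.
  case: (eqVneq p 2) => [p2 | np2].
    have e1 : ((p`_(2^'))%N = 1)%N by apply: part_p'nat; rewrite pnatNK p2 pnat_id.
    have e2 : ((r`_2)%N = 1)%N by apply: part_p'nat; rewrite p'natE // -p2.
    have e3 : ((p`_2)%N = 2)%N by rewrite p2 part_pnat_id ?pnat_id.
    by rewrite e1 e2 e3 muln1 h1 mul1n -p2 k1.
  have e1 : ((p`_(2^'))%N = p)%N by rewrite part_pnat_id // pnatE // inE /= eq_sym.
  have e2 : ((p`_2)%N = 1)%N by apply: part_p'nat; rewrite pnatE // inE /= eq_sym.
  rewrite e1 e2 muln1 h2 andbT chinese_remainder ?h1 ?k1 //.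
  rewrite coprime_sym prime_coprime //; apply/negP => /dvdn_trans /(_ (dvdn_part _ _)).
  by apply/negP.
have rpm : (r * p)%N %| #|A| by rewrite Gauss_dvd ?rm ?pm // coprime_sym.
have := rmax _ rpm okrp.
by rewrite leqNgt ltn_Pmulr.
Qed.

Lemma part4a p : (p \in piG' G) = (p \in primes #|A|) && (p \notin primes (rGA G A)).
Proof.
case: (boolP (prime p)) => pr_p.
  apply/idP/idP => [pi'p | h].
    by apply/(L5 pr_p); apply: L4b.
  by have [x [Hx ox]] := proj2 (L5 pr_p) h; apply: L4a Hx ox.
by rewrite inE /= (negbTE pr_p) mem_primes (negbTE pr_p).
Qed.

Lemma part4b : partn #|G : B| (piG' G) = partn #|A| (piG' G).
Proof.
have eA : #|A| = (#|G : B| * #|A :&: B|)%N.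
  have := mul_cardG A B; rewrite defG -(Lagrange sBG) -mulnA mulnC.
  by move/eqP; rewrite eqn_pmul2l ?cardG_gt0 // => /eqP.
have e1 : partn #|A :&: B| (piG' G) = 1%N.
  rewrite -card_abel_pcore ?abAB // -pcoreI_AB (proj2 part3).
  by rewrite cards1.
by rewrite eA partnM ?cardG_gt0 ?e1 ?muln1.
Qed.

Lemma partnU n (sg tau : nat_pred) : 0 < n -> {in sg, forall q, q \notin tau} ->
  (n`_[predU sg & tau] = n`_sg * n`_tau)%N.
Proof.
move=> n_gt0 dj.
rewrite -{1}(partnC sg (part_gt0 [predU sg & tau] n)).
rewrite partn_part; last by move=> q qs; rewrite inE /= qs.
congr (_ * _)%N; rewrite -partnI; apply: eq_partn => q; rewrite !inE /=.
by case: (boolP (q \in sg)) => qs /=; [rewrite (negbTE (dj q qs)) | rewrite andbT].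
Qed.

Lemma comm5 p : p \in piG G -> [~: 'O_p^'(B), 'O_p(A)] = 1.
Proof.
rewrite inE /= => /and3P[_ _ /existsP[H /andP[hallH nHG]]].
have sHG := pHall_sub hallH.
have sBH : 'O_p^'(B) \subset H.
  by rewrite (sub_normal_Hall hallH nHG) ?pcore_pgroup // (subset_trans (pcore_sub _ _) sBG).
apply/trivgP; rewrite -(coprime_TIg (G := H) (H := 'O_p(A))).
  apply: commg_subI; rewrite subsetI.
    rewrite sBH /=; exact: subset_trans (subset_trans sBH sHG) (normal_norm (OA_normal p)).
  rewrite subxx /=; exact: subset_trans (subset_trans (pcore_sub _ _) sAG) (normal_norm nHG).
apply: pnat_coprime (pHall_pgroup hallH) _.
by rewrite pnatNK; apply: pcore_pgroup.
Qed.

Lemma pcore_sub_abel (sg : nat_pred) (Y : {group gT}) :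
  Y \subset A -> (forall q, prime q -> q \in sg -> 'O_q(A) \subset Y) ->
  'O_sg(A) \subset Y.
Proof.
move=> sYA hq.
have abY : abelian Y := abelianS sYA abA.
have dv : (#|A|`_sg %| #|Y|)%N.
  apply/dvdn_partP; first exact: part_gt0.
  move=> q; rewrite mem_primes => /and3P[pr_q _ qd].
  have qs : q \in sg.
    apply: (pnatPpi (part_pnat sg #|A|)); rewrite mem_primes pr_q part_gt0; exact: qd.
  rewrite partn_part; last by move=> q' /eqP ->.
  rewrite -card_abel_pcore ?abA //; apply: cardSg; exact: hq.
have sOY : 'O_sg(Y) \subset 'O_sg(A).
  by rewrite sub_abel_pcore ?abA ?pcore_pgroup // (subset_trans (pcore_sub _ _) sYA).
have eO : 'O_sg(Y) = 'O_sg(A).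
  apply/eqP; rewrite eqEcard sOY /= !card_abel_pcore ?abA //.
  apply: dvdn_leq; first exact: part_gt0.
  rewrite -(part_pnat_id (part_pnat sg #|A|)); exact: partn_dvd dv.
by rewrite -eO pcore_sub.
Qed.

Lemma centsigma (sg : nat_pred) : {subset sg <= piG G} ->
  'O_sg(A) \subset 'C('O_sg^'(B)).
Proof.
move=> ssg.
have sCA : 'C_A('O_sg^'(B)) \subset A := subsetIl _ _.
have := pcore_sub_abel sCA.
move=> h; have := h sg; rewrite subsetI => /(_ _)/andP[] //.
move=> q pr_q qs; rewrite subsetI pcore_sub /=.
apply: subset_trans (centS (_ : 'O_sg^'(B) \subset 'O_q^'(B))).
  by rewrite centsC; apply/commG1P; apply: comm5; apply: ssg.
by apply: sub_pcore => q'; rewrite !inE; apply: contra => /eqP ->.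
Qed.

Definition HH (sg : nat_pred) := 'O_sg(A) * 'O_sg(B).

Lemma HH_eq (s1 s2 : nat_pred) : s1 =i s2 -> HH s1 = HH s2.
Proof. by move=> e; rewrite /HH (eq_pcore A e) (eq_pcore B e). Qed.

Lemma HH_card sg : #|HH sg| = (#|G|`_sg)%N.
Proof.
have [_ hH] := part1 sg.
exact: (card_Hall (G := G) (H := Group (gset_mu sg)) hH).
Qed.

Lemma HH_dprod (sg tau : nat_pred) : {in sg, forall q, q \notin tau} ->
  'O_sg(A) \subset 'C('O_tau(B)) -> 'O_tau(A) \subset 'C('O_sg(B)) ->
  HH sg \x HH tau = HH [predU sg & tau].
Proof.
move=> dj c1 c2.
pose Hs := Group (gset_mu sg); pose Ht := Group (gset_mu tau).
pose Hu := Group (gset_mu [predU sg & tau]).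
have [_ hs] := part1 sg; have [_ ht] := part1 tau.
have cst : Ht \subset 'C(Hs).
  rewrite /= centM subsetI; apply/andP; split; apply: mul_subG.
  - exact: subset_trans (pcore_sub _ _) (sub_abelian_cent abA (pcore_sub _ _)).
  - by rewrite centsC.
  - exact: c2.
  - exact: subset_trans (pcore_sub _ _) (sub_abelian_cent abB (pcore_sub _ _)).
have TI : Hs :&: Ht = 1.
  apply: coprime_TIg; apply: (pnat_coprime (pHall_pgroup hs)).
  apply: sub_in_pnat (pHall_pgroup ht) => q _ qt; rewrite inE /=.
  by apply/negP => qs; move/negP: (dj q qs).
have -> : HH sg \x HH tau = Hs \x Ht by [].
rewrite dprodE //; apply/eqP; rewrite eqEcard; apply/andP; split.
  apply: (mul_subG (G := Hu)); apply: mulgSS; apply: sub_pcore => q; rewrite inE /= => -> //; by rewrite orbT.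
rewrite (TI_cardMg TI) /= !HH_card partnU //.
Qed.

Lemma HH0 : HH pred0 = 1.
Proof.
have e : forall X : {group gT}, 'O_pred0(X) = 1.
  move=> X; apply/eqP; rewrite trivg_card1; apply/eqP.
  apply: (pnat_1 (pcore_pgroup pred0 X)).
  by rewrite /pnat cardG_gt0 /=; apply/allP => q _; rewrite inE.
by rewrite /HH !e mulg1.
Qed.

Lemma big_HH (s : seq nat) : uniq s ->
  \big[dprod/1]_(p <- s | p \in piG G) ('O_p(A) * 'O_p(B))
    = HH [pred q | (q \in s) && (q \in piG G)].
Proof.
elim: s => [|p s IH] /=.
  by move=> _; rewrite big_nil -HH0; apply: HH_eq => q; rewrite !inE.
move=> /andP[nps us]; rewrite big_cons IH //.
case: ifP => pip.
  rewrite (HH_dprod (sg := p)).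
  - by apply: HH_eq => q; rewrite !inE; case: (eqVneq q p) => [-> | ] //=.
  - by move=> q /eqP ->; rewrite inE /= negb_and nps.
  - apply: subset_trans (centS (_ : _ \subset 'O_p^'(B))).
      by rewrite centsC; apply/commG1P; apply: comm5.
    apply: sub_pcore => q; rewrite !inE => /andP[qs _]; apply/eqP => qp.
    by rewrite -qp qs in nps.
  - apply: subset_trans (centsigma _) (centS _).
      by move=> q; rewrite inE => /andP[].
    apply: sub_pcore => q; rewrite !inE => /eqP ->; by rewrite negb_and nps.
apply: HH_eq => q; rewrite -!topredE /= in_cons; case: (eqVneq q p) => [-> | ] /=; rewrite ?pip ?andbF ?(negbTE nps) //.
Qed.

Lemma piG_primes p : p \in piG G -> p \in primes #|G|.
Proof. by rewrite inE /= mem_primes cardG_gt0 => /and3P[-> -> _]. Qed.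

Lemma pi'_sub : {subset piG' G <= (piG G)^'}.
Proof. by move=> p; rewrite [p \in piG' G]inE /= => /and3P[_ _]. Qed.

Lemma partG_pi' : (#|G|`_(piG' G) * #|G|`_(piG G))%N = #|G|.
Proof.
rewrite (@eq_in_partn (piG' G) (piG G)^'); first by rewrite mulnC partnC.
move=> q; rewrite mem_primes => /and3P[pr_q _ qG].
rewrite [q \in piG' G]inE /= pr_q qG /=; by [].
Qed.

Lemma part5 :
  'O_(piG' G)(A) ><| ('O_(piG' G)(B) \x
     \big[dprod/1]_(p <- primes #|G| | p \in piG G) ('O_p(A) * 'O_p(B))) = G.
Proof.
rewrite big_HH ?primes_uniq //.
rewrite (@HH_eq _ (piG G)); last first.
  by move=> q; rewrite -topredE /=; case: (boolP (q \in piG G)) => h; rewrite ?andbT ?andbF ?piG_primes.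
set pi := piG G; set pi' := piG' G.
pose K1 := Group (gset_mu pi).
have [_ hK1] := part1 pi.
set Bp' := 'O_pi'(B).
have sBp'G : Bp' \subset G := subset_trans (pcore_sub _ _) sBG.
have cK1 : K1 \subset 'C(Bp').
  apply: mul_subG.
    apply: subset_trans (centsigma (fun q (h : q \in pi) => h)) (centS _).
    by apply: sub_pcore; apply: pi'_sub.
  exact: subset_trans (pcore_sub _ _) (sub_abelian_cent abB (pcore_sub _ _)).
have pBp' : pi^'.-group Bp'.
  by apply: sub_in_pnat (pcore_pgroup _ _) => q _; apply: pi'_sub.
have TI1 : Bp' :&: K1 = 1.
  apply: coprime_TIg; apply: (pnat_coprime pBp').
  by rewrite pnatNK; apply: (pHall_pgroup hK1).
have -> : HH pi = K1 by [].
rewrite dprodE //.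
have gsK : group_set (Bp' * K1).
  by apply/comm_group_setP; apply: esym; apply: normC; apply: cents_norm.
pose K := Group gsK.
have -> : Bp' * K1 = K by [].
have sKG : K \subset G by apply: mul_subG sBp'G (pHall_sub hK1).
have cardK : #|K| = (#|Bp'| * #|K1|)%N by rewrite /= (TI_cardMg TI1).
have hallB : pi^'.-Hall(K) Bp'.
  rewrite pHallE; apply/andP; split; first exact: mulG_subl.
  rewrite cardK partnM ?cardG_gt0 //.
  rewrite part_pnat_id // part_p'nat ?muln1 //.
  by rewrite pnatNK; apply: (pHall_pgroup hK1).
have nBK : Bp' <| K.
  apply/andP; split; first exact: mulG_subl.
  apply: mul_subG; first exact: normG.
  exact: cents_norm.
have TI2 : 'O_pi'(A) :&: K = 1.
  apply/trivgP; rewrite -(proj2 part3) subsetI subsetIl /=.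
  have sIK : ('O_pi'(A) :&: K)%G \subset K by apply: subsetIr.
  have := sub_normal_Hall hallB nBK sIK; rewrite /= => ->.
  have pA : pi^'.-group 'O_pi'(A).
    by apply: sub_in_pnat (pcore_pgroup _ _) => q _; apply: pi'_sub.
  exact: (@pgroupS _ _ _ ('O_pi'(A) :&: K)%G (subsetIl _ _) pA).
rewrite sdprodE //; last first.
  exact: subset_trans sKG (normal_norm (OA_normal _)).
apply/eqP; rewrite eqEcard mul_subG ?(subset_trans (pcore_sub _ _) sAG) //=.
rewrite (TI_cardMg TI2) cardK mulnA.
have TI3 := proj2 part3.
rewrite -(TI_cardMg TI3).
have -> : #|'O_pi'(A) * 'O_pi'(B)| = #|HH pi'| by [].
by rewrite !HH_card partG_pi'.
Qed.

Lemma card_imset_eqrel (T1 T2 T3 : finType) (f : T1 -> T2) (f' : T1 -> T3) (S : {pred T1}) :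
  {in S &, forall x y, (f x == f y) = (f' x == f' y)} -> #|f @: S| = #|f' @: S|.
Proof.
move=> h; pose pr := fun x => (f x, f' x).
have e1 : f @: S = fst @: (pr @: S) by rewrite -imset_comp; apply: eq_imset.
have e2 : f' @: S = snd @: (pr @: S) by rewrite -imset_comp; apply: eq_imset.
have i1 : {in pr @: S &, injective fst}.
  move=> _ _ /imsetP[x Sx ->] /imsetP[y Sy ->] /= e.
  by rewrite /pr e; move: (h x y Sx Sy); rewrite e eqxx => /esym/eqP ->.
have i2 : {in pr @: S &, injective snd}.
  move=> _ _ /imsetP[x Sx ->] /imsetP[y Sy ->] /= e.
  by rewrite /pr e; move: (h x y Sx Sy); rewrite e eqxx => /eqP ->.
by rewrite e1 e2 (card_in_imset i1) (card_in_imset i2).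
Qed.

Lemma size_undup_eqrel (T1 T2 T3 : eqType) (f : T1 -> T2) (f' : T1 -> T3) (s : seq T1) :
  {in s &, forall x y, (f x == f y) = (f' x == f' y)} ->
  size (undup (map f s)) = size (undup (map f' s)).
Proof.
elim: s => [|x s IH] h //=.
have h' : {in s &, forall x y, (f x == f y) = (f' x == f' y)}.
  by move=> u v us vs; apply: h; rewrite inE ?us ?vs orbT.
have ef : (f x \in map f s) = (f' x \in map f' s).
  apply/mapP/mapP => [[y ys e] | [y ys e]]; exists y => //; apply/eqP.
    by rewrite -h ?inE ?eqxx ?ys ?orbT // e.
  by rewrite h ?inE ?eqxx ?ys ?orbT // e.
by rewrite ef; case: ifP => _ /=; rewrite IH.
Qed.

Lemma card_seq_undup (T : finType) (s : seq T) : #|[set y in s]| = size (undup s).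
Proof.
by rewrite cardsE -(eq_card (mem_undup s)); apply/card_uniqP; apply: undup_uniq.
Qed.

Definition Fmap (Y : {set gT}) (g : gT) : {ffun gT -> gT} :=
  [ffun x => if x \in Y then x ^ g else x].

Lemma Fmap_eq (Y : {group gT}) g h : G \subset 'N(Y) -> g \in G -> h \in G ->
  (Fmap Y g == Fmap Y h) = (coset 'C_G(Y) g == coset 'C_G(Y) h).
Proof.
move=> nYG Gg Gh.
have nCG : G \subset 'N('C_G(Y)) by apply: normsI; [exact: normG | exact: norms_cent].
have Ng := subsetP nCG g Gg; have Nh := subsetP nCG h Gh.
rewrite eq_mulgV1 -morphV // -morphM ?groupV //.
apply/eqP/eqP => [e | e].
  apply: coset_id; rewrite inE groupM ?groupV //=; apply/centP => y Yy.
  apply/commute_sym/commgP/conjg_fixP.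
  have := congr1 (fun f : {ffun gT -> gT} => f y) e; rewrite /= !ffunE Yy => e1.
  by rewrite conjgM e1 conjgK.
have := coset_idr (groupM Ng (groupVr Nh)) e; rewrite inE => /andP[_ /centP cY].
apply/ffunP => y; rewrite !ffunE; case: ifP => // Yy.
have : y ^ (g * h^-1) = y by apply/conjg_fixP/commgP; apply/commute_sym/cY.
by rewrite conjgM => /(congr1 (fun z => z ^ h)); rewrite conjgKV.
Qed.

Lemma nCG (Y : {group gT}) : G \subset 'N(Y) -> G \subset 'N('C_G(Y)).
Proof. by move=> nYG; apply: normsI; [exact: normG | exact: norms_cent]. Qed.

Lemma card_Fmap (Y : {group gT}) (S : {set gT}) : G \subset 'N(Y) -> S \subset G ->
  #|Fmap Y @: S| = #|coset 'C_G(Y) @: S|.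
Proof.
move=> nYG sSG; apply: card_imset_eqrel => g h Sg Sh.
by apply: Fmap_eq; rewrite ?(subsetP sSG).
Qed.

Lemma quo_imset (L : {group gT}) : G \subset 'N(L) -> coset L @: G = G / L.
Proof. by move=> nLG; rewrite quotientE morphimEsub. Qed.

Lemma card_Fmap_G (Y : {group gT}) : G \subset 'N(Y) ->
  #|Fmap Y @: G| = #|G : 'C_G(Y)|.
Proof.
move=> nYG; rewrite card_Fmap // quo_imset ?card_quotient //; exact: nCG.
Qed.

Definition psiA (k : nat) : {ffun gT -> gT} := [ffun x => if x \in A then x ^+ k else x].

Lemma TG_set : [set y in map psiA (TG G A)] = Fmap A @: G.
Proof.
apply/setP => y; rewrite inE; apply/mapP/imsetP => [[k Tk ->] | [g Gg ->]].
  have [_ [g Gg hg]] := T_to Tk; exists g => //.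
  by apply/ffunP => x; rewrite !ffunE; case: ifP => // Ax; rewrite hg.
have [k Tk hk] := T_of Gg; exists k => //.
by apply/ffunP => x; rewrite !ffunE; case: ifP => // Ax; rewrite hk.
Qed.

Lemma sizeT : size (TG G A) = #|G : 'C_G(A)|.
Proof.
have [a defA] := cyclicP cA.
have oa : #[a] = #|A| by rewrite defA.
have Aa : a \in A by rewrite defA cycle_id.
have inj : {in TG G A &, injective psiA}.
  move=> k k' Tk Tk' e.
  have := congr1 (fun f : {ffun gT -> gT} => f a) e; rewrite /= !ffunE Aa => /eqP.
  rewrite eq_expg_mod_order oa !modn_small // => [/eqP //||].
    by move: Tk'; rewrite memTG => /and3P[].
  by move: Tk; rewrite memTG => /and3P[].
have uT : uniq (TG G A) by apply: filter_uniq; apply: iota_uniq.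
rewrite -(size_map psiA) -(card_uniqP _) ?map_inj_in_uniq //.
by rewrite -cardsE TG_set card_Fmap_G //; exact: normal_norm nAG.
Qed.

Lemma conj_pow g k n : (forall x, x \in A -> x ^ g = x ^+ k) ->
  forall x, x \in A -> x ^ (g ^+ n) = x ^+ (k ^ n).
Proof.
move=> hk; elim: n => [|n IH] x Ax; first by rewrite expg0 conjg1 expn0 expg1.
by rewrite expgSr conjgM IH // conjXg hk // -expgnA -expnS.
Qed.

Lemma nu_eq : nuGA G A =i piG' G.
Proof. by move=> q; rewrite part4a. Qed.

Section OG.
Let X := 'O_(piG' G)(A).
Let C := 'C_G(A).
Let K := 'C_G(X).
Let e := ((size (TG G A))`_((nuGA G A)^'))%N.
Let Gnu := [set g in G | g ^+ e \in C].
Definition psiX (k : nat) : {ffun gT -> gT} := [ffun x => if x \in X then x ^+ k else x].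

Lemma nXG : G \subset 'N(X).
Proof. exact: normal_norm (OA_normal _). Qed.

Lemma sXA : X \subset A.
Proof. exact: pcore_sub. Qed.

Lemma sCK : C \subset K.
Proof. by apply: setIS; apply: centS; exact: sXA. Qed.

Lemma oGA_card : oGA G A = #|Fmap X @: Gnu|.
Proof.
have [c defX] := cyclicP (cyclicS sXA cA).
have oc : #[c] = #|X| by rewrite /X defX.
have Xc : c \in X by rewrite /X defX cycle_id.
have eA : (#|A|`_(nuGA G A))%N = #|X| by rewrite (eq_partn _ nu_eq) /X card_abel_pcore ?abA.
rewrite /oGA eA (@size_undup_eqrel _ _ _ _ psiX); last first.
  move=> k k' _ _; apply/eqP/eqP => [ek | ek].
    apply/ffunP => x; rewrite !ffunE; case: ifP => // Xx.
    have dx : #[x] %| #|X| by apply: order_dvdG.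
    by rewrite -expg_mod_order -(modn_dvdm k dx) ek modn_dvdm // expg_mod_order.
  have := congr1 (fun f : {ffun gT -> gT} => f c) ek; rewrite /= !ffunE Xc => /eqP.
  by rewrite eq_expg_mod_order oc => /eqP.
rewrite -card_seq_undup; suff -> : [set y in map psiX (TG_nu' G A)] = Fmap X @: Gnu by [].
have [a defA] := cyclicP cA.
have oa : #[a] = #|A| by rewrite defA.
have Aa : a \in A by rewrite defA cycle_id.
apply/setP => y; rewrite inE; apply/mapP/imsetP => [[k Tk ->] | [g Gg ->]].
  move: Tk; rewrite mem_filter => /andP[ke Tk].
  have [_ [g Gg hg]] := T_to Tk; exists g.
    rewrite inE Gg /= inE groupX //=; apply/centP => x Ax.
    apply/commute_sym/commgP/conjg_fixP; rewrite (conj_pow _ hg) //.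
    rewrite -expg_mod_order -(modn_dvdm _ (order_dvdG Ax)) (eqP ke).
    by rewrite modn_dvdm ?order_dvdG // expg_mod_order expg1.
  apply/ffunP => x; rewrite !ffunE; case: ifP => // Xx.
  by rewrite hg // (subsetP sXA).
move: Gg; rewrite inE => /andP[Gg Cg].
have [k Tk hk] := T_of Gg; exists k.
  rewrite mem_filter Tk andbT; move: Cg; rewrite inE => /andP[_ /centP cg].
  have : a ^ (g ^+ e) = a by apply/conjg_fixP/commgP/commute_sym/cg.
  rewrite (conj_pow _ hk) // -{2}(expg1 a) => /eqP; rewrite eq_expg_mod_order oa.
  by [].
apply/ffunP => x; rewrite !ffunE; case: ifP => // Xx.
by rewrite hk // (subsetP sXA).
Qed.

Lemma sGnuG : Gnu \subset G.
Proof. by apply/subsetP => g; rewrite inE => /andP[]. Qed.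

Lemma nKG : G \subset 'N(K).
Proof. exact: nCG nXG. Qed.

Lemma nCAG : G \subset 'N(C).
Proof. exact: nCG (normal_norm nAG). Qed.

Lemma abQ : abelian (G / K).
Proof.
apply: sub_der1_abelian; apply: subset_trans der1A _.
by rewrite subsetI sAG /=; apply: sub_abelian_cent abA sXA.
Qed.

Lemma Gnu_quo : coset K @: Gnu = 'O_((nuGA G A)^')(G / K).
Proof.
set nu' := (nuGA G A)^'.
have abQ' := abQ.
apply/setP => y; apply/imsetP/idP => [[g Gnug ->] | Oy].
  move: Gnug; rewrite inE => /andP[Gg Cg].
  have Qy : coset K g \in G / K by apply: mem_quotient.
  rewrite -cycle_subG; apply: pcore_max.
    rewrite /pgroup -orderE; apply: (@pnat_dvd _ e); last exact: part_pnat.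
    rewrite order_dvdn -morphX ?(subsetP nKG) //; apply/eqP; apply: coset_id.
    exact: subsetP sCK _ Cg.
  by rewrite -sub_abelian_normal // cycle_subG.
have Qy : y \in G / K := subsetP (pcore_sub _ _) y Oy.
move: Qy; rewrite -quo_imset ?nKG // => /imsetP[g Gg ey].
have NKg := subsetP nKG g Gg; have NCg := subsetP nCAG g Gg.
set h := g.`_nu'.
have sgG : <[g]> \subset G by rewrite cycle_subG.
have Gh : h \in G := subsetP sgG _ (cycle_constt _ _).
have pey : nu'.-elt y by apply: mem_p_elt (pcore_pgroup _ _) Oy.
have ey' : coset K h = y.
  have ey2 : coset_morphism K g = y by rewrite ey.
  by rewrite /h (morph_constt (coset_morphism K)) // ey2 constt_p_elt.
have hC : h ^+ e \in C.
  have ct : coset C h = (coset C g).`_nu' by rewrite /h (morph_constt (coset_morphism C)).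
  have pe : nu'.-elt (coset C h) by rewrite ct p_elt_constt.
  have tpos : 0 < size (TG G A) by rewrite sizeT indexg_gt0.
  have d1 : #[coset C h] %| size (TG G A).
    by rewrite sizeT -card_quotient ?nCAG // order_dvdG // mem_quotient.
  have dv : #[coset C h] %| e.
    by rewrite -(part_pnat_id pe); apply: partn_dvd tpos d1.
  apply: coset_idr; first by rewrite groupX // (subsetP nCAG).
  by rewrite morphX ?(subsetP nCAG) //; apply/eqP; rewrite -order_dvdn.
by exists h; [rewrite inE Gh hC | rewrite ey'].
Qed.

Lemma part4c : oGA G A = oG G.
Proof.
rewrite oGA_card card_Fmap ?sGnuG ?nXG // Gnu_quo.
rewrite (card_Hall (nilpotent_pcore_Hall _ (abelian_nil abQ))).
rewrite /oG (proj1 part3).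
have -> : InnG G 'O_(piG' G)(A) = Fmap X @: G by [].
rewrite card_Fmap ?nXG ?subxx // quo_imset ?nKG //.
apply: eq_in_partn => q; rewrite mem_primes => /and3P[pr_q _ qQ].
have qG : q %| #|G|.
  apply: dvdn_trans qQ _; rewrite card_quotient ?nKG //; exact: dvdn_indexg.
rewrite !inE -part4a [q \in piG' G]inE /= pr_q qG /=.
by rewrite negbK inE /= pr_q qG.
Qed.
End OG.
End Meta.

Unset Implicit Arguments.

Theorem lemma3p1 (gT : finGroupType) (G A B : {group gT}) :
  metacyclic G -> A <| G -> cyclic A -> cyclic B -> A * B = G ->
  let m := #|A| in let s := #|G : B| in
  let r := rGA G A in let o := oGA G A in
  let pi := piG G in let pi' := piG' G in
  (* (1) *)
  (forall mu : nat_pred,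
     group_set ('O_mu(A) * 'O_mu(B)) /\ mu.-Hall(G) ('O_mu(A) * 'O_mu(B))) /\
  (* (2) *)
  (forall p : nat, prime p ->
     ((p \in pi') <-> (exists x, x \in G^`(1) :\: 'Z(G) /\ #[x] = p)) /\
     ((exists x, x \in G^`(1) :\: 'Z(G) /\ #[x] = p) <->
      (exists x, x \in A :\: 'Z(G) /\ #[x] = p))) /\
  (* (3) *)
  ('O_pi'(G^`(1)) = 'O_pi'(A) /\ 'O_pi'(A) :&: 'O_pi'(B) = 1) /\
  (* (4) *)
  ((forall p : nat, (p \in pi') = (p \in primes m) && (p \notin primes r)) /\
   partn s pi' = partn m pi' /\ o = oG G) /\
  (* (5) *)
  ('O_pi'(A) ><| ('O_pi'(B) \x
     \big[dprod/1]_(p <- primes #|G| | p \in pi) ('O_p(A) * 'O_p(B))) = G /\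
   (forall p : nat, p \in pi -> [~: 'O_p^'(B), 'O_p(A)] = 1)).
Proof.
move=> _ nAG cA cB defG m s r o pi pi'.
split; first exact: (part1 nAG cA cB defG).
split.
  move=> p pr_p; split; last exact: (L2b nAG cA cB defG pr_p).
  split => [h | h].
    have [x hx] := L4b nAG cA cB defG pr_p h.
    by apply/(L2b nAG cA cB defG pr_p); exists x.
  have [x [hx ox]] := proj1 (L2b nAG cA cB defG pr_p) h.
  exact: (L4a nAG cA defG pr_p hx ox).
split; first exact: (part3 nAG cA cB defG).
split; first split.
- exact: (part4a nAG cA cB defG).
- split; first exact: (part4b nAG cA cB defG).
  exact: (part4c nAG cA cB defG).
split; first exact: (part5 nAG cA cB defG).
move=> p pip; exact: (comm5 nAG defG pip).
Qed.
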